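(* Let $\varphi$ be a quasi-concave function on $\Omega$ (where $\Omega=(0,1)$ or $\Omega=(0,\infty)$) such that $\lim_{t\to0^+}t/\varphi(t)=0$. Then the Marcinkiewicz space $M_\varphi$ on $\Omega$ contains a lattice isometric copy of $\ell_\infty$.
   Context: A function $\varphi$ on $\Omega$ is quasi-concave if $\varphi(0)=0$, $\varphi$ is positive and non-decreasing on $\Omega$, and $t\mapsto\varphi(t)/t$ is non-increasing. The Marcinkiewicz space $M_\varphi$ is the space of measurable $f$ on $\Omega$ with $\|f\|_{M_\varphi}=\sup_{t\in\Omega}\frac{\varphi(t)}{t}\int_0^tf^*(s)\,ds<\infty$, where $f^*$ is the non-increasing rearrangement of $|f|$ with respect to Lebesgue measure. ''Contains a lattice isometric copy of $\ell_\infty$'' means there is a linear isometric embedding $T:\ell_\infty\to M_\varphi$ which is a lattice homomorphism. *)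

(* Defs.v *)
From HB Require Import structures.
From mathcomp Require Import all_boot all_order all_algebra.
From mathcomp Require Import all_classical all_reals all_analysis.
Set Implicit Arguments. Unset Strict Implicit. Unset Printing Implicit Defensive.
Import Order.TTheory GRing.Theory Num.Theory.
Import numFieldNormedType.Exports.
Local Open Scope classical_set_scope.
Local Open Scope ring_scope.

Section Defs.
Variable R : realType.

Definition quasi_concave (Omega : set R) (phi : R -> R) : Prop :=
  [/\ phi 0 = 0,
      (forall t, Omega t -> 0 < phi t),
      (forall s t, Omega s -> Omega t -> s <= t -> phi s <= phi t) &
      (forall s t, Omega s -> Omega t -> s <= t -> phi t / t <= phi s / s)].

Definition distfun (Omega : set R) (f : R -> R) (l : R) : \bar R :=
  (@lebesgue_measure R) (Omega `&` [set t | l < `|f t|]).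

Definition rearr (Omega : set R) (f : R -> R) (s : R) : \bar R :=
  ereal_inf [set l%:E | l in [set l : R | 0 <= l /\ (distfun Omega f l <= s%:E)%E]].

Definition Mnorm (Omega : set R) (phi : R -> R) (f : R -> R) : \bar R :=
  ereal_sup [set ((phi t / t)%:E *
     \int[@lebesgue_measure R]_(s in [set s : R | (0 < s < t)%R]) rearr Omega f s)%E
     | t in Omega].

Definition in_Marcinkiewicz (Omega : set R) (phi : R -> R) (f : R -> R) : Prop :=
  measurable_fun Omega f /\ (Mnorm Omega phi f < +oo)%E.

Definition bounded_seq (x : nat -> R) : Prop := exists M : R, forall n, `|x n| <= M.
Definition linf_norm (x : nat -> R) : \bar R := ereal_sup (range (fun n => (`|x n|)%:E)).

Definition ae_eq_on (Omega : set R) (f g : R -> R) : Prop :=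
  {ae @lebesgue_measure R, forall t, Omega t -> f t = g t}.

Definition lattice_isometric_embedding (Omega : set R) (phi : R -> R)
    (T : (nat -> R) -> (R -> R)) : Prop :=
  [/\ (forall x, bounded_seq x -> in_Marcinkiewicz Omega phi (T x)),
      (forall x y, bounded_seq x -> bounded_seq y ->
         ae_eq_on Omega (T (x \+ y)) (T x \+ T y)),
      (forall (a : R) x, bounded_seq x ->
         ae_eq_on Omega (T (fun n => a * x n)) (fun t => a * T x t)),
      (forall x y, bounded_seq x -> bounded_seq y ->
         ae_eq_on Omega (T (fun n => Num.max (x n) (y n)))
                        (fun t => Num.max (T x t) (T y t))) &
      (forall x, bounded_seq x -> Mnorm Omega phi (T x) = linf_norm x)].

End Defs.

(* Main.v *)
Require Import Defs.
From HB Require Import structures.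
From mathcomp Require Import all_boot all_order all_algebra.
From mathcomp Require Import all_classical all_reals all_analysis.
From mathcomp Require Import ring lra zify.
From mathcomp Require Import measurable_realfun.
Import Order.TTheory GRing.Theory Num.Theory.
Import numFieldNormedType.Exports.
Local Open Scope classical_set_scope.
Local Open Scope ring_scope.
Set Implicit Arguments. Unset Strict Implicit. Unset Printing Implicit Defensive.

Section Main.
Variable R : realType.
Variable Om : set R.
Variable phi : R -> R.
Hypothesis hOm : Om = [set t : R | 0 < t < 1] \/ Om = [set t : R | 0 < t].
Hypothesis hq : quasi_concave Om phi.
Hypothesis hlim : (fun t => t / phi t) @ 0^'+ --> 0.

Lemma Om_pos u : Om u -> 0 < u.
Proof. by case: hOm => -> /=; [case/andP|]. Qed.

Lemma Om_down u v : 0 < u -> u <= v -> Om v -> Om u.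
Proof.
case: hOm => -> /= u0 uv; last by [].
by case/andP=> _ v1; rewrite u0 (le_lt_trans uv v1).
Qed.

Lemma Om_half u : 0 < u -> u <= 2^-1 -> Om u.
Proof.
move=> u0 uh; case: hOm => -> /=; last by [].
by rewrite u0 (le_lt_trans uh)// invf_lt1// ltr1n.
Qed.

Lemma mOm : measurable Om.
Proof.
case: hOm => ->.
  have -> : [set t : R | 0 < t < 1] = `]0, 1[%classic.
    by apply/seteqP; split => x /=; rewrite in_itv.
  exact: measurable_itv.
have -> : [set t : R | 0 < t] = `]0, +oo[%classic.
  by apply/seteqP; split => x /=; rewrite in_itv /= andbT.
exact: measurable_itv.
Qed.

Lemma phi_pos u : Om u -> 0 < phi u.
Proof. by case: hq => _ h _ _; apply: h. Qed.

Lemma phi_mono u v : Om u -> Om v -> u <= v -> phi u <= phi v.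
Proof. by case: hq => _ _ h _; apply: h. Qed.

Lemma phi_qc u v : Om u -> Om v -> u <= v -> phi v / v <= phi u / u.
Proof. by case: hq => _ _ _ h; apply: h. Qed.

Definition psi u := u / phi u.

Lemma psi_gt0 u : Om u -> 0 < psi u.
Proof. by move=> Ou; rewrite /psi; apply: divr_gt0; [exact: Om_pos|exact: phi_pos]. Qed.

Lemma psi_mono u v : Om u -> Om v -> u <= v -> psi u <= psi v.
Proof.
move=> Ou Ov uv; have := phi_qc Ou Ov uv.
have u0 := Om_pos Ou; have v0 := Om_pos Ov.
have pu := phi_pos Ou; have pv := phi_pos Ov.
rewrite /psi -[u / phi u]invf_div -[v / phi v]invf_div lef_pV2 ?posrE ?divr_gt0//.
Qed.

Lemma psi_lb u t : Om u -> Om t -> u <= t -> u / phi t <= psi u.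
Proof.
move=> Ou Ot ut; rewrite /psi ler_wpM2l ?(ltW (Om_pos Ou))//.
by rewrite lef_pV2 ?posrE ?phi_pos// phi_mono.
Qed.

Lemma psi_lip u v : Om u -> Om v -> u <= v -> psi v - psi u <= (v - u) / phi u.
Proof.
move=> Ou Ov uv; rewrite mulrBl lerD2r /psi.
rewrite ler_wpM2l ?(ltW (Om_pos Ov))//.
by rewrite lef_pV2 ?posrE ?phi_pos// phi_mono.
Qed.

Lemma Om_lt1 u : 0 < u -> u < 1 -> Om u.
Proof. by move=> u0 u1; case: hOm => -> /=; rewrite ?u0. Qed.

Lemma psi_lipabs a u v : Om a -> a <= u -> a <= v -> u < 1 -> v < 1 ->
  `|psi u - psi v| <= `|u - v| / phi a.
Proof.
move=> Oa au av u1 v1.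
have a0 := Om_pos Oa.
have Ou : Om u by apply: Om_lt1 => //; exact: lt_le_trans au.
have Ov : Om v by apply: Om_lt1 => //; exact: lt_le_trans av.
have pa := phi_pos Oa.
wlog uv : u v au av u1 v1 Ou Ov / u <= v.
  move=> H; have [uv|vu] := leP u v; first exact: H.
  by rewrite distrC [X in _ <= X / _]distrC H // ltW.
rewrite distrC ger0_norm; last by rewrite subr_ge0 psi_mono.
rewrite distrC [`|v - u|]ger0_norm; last by rewrite subr_ge0.
apply: (le_trans (psi_lip Ou Ov uv)).
rewrite ler_wpM2l ?subr_ge0 // lef_pV2 ?posrE ?phi_pos //.
exact: phi_mono.
Qed.

Definition cc (k : nat) t := (1 - (k.+2%:R)^-1) / phi t.

Lemma step k t : 0 < t -> t <= 2^-1 -> exists s, [/\ 0 < s, s <= t / k.+2%:R &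
  forall u, s <= u -> u <= t -> psi s - cc k t * s <= psi u - cc k t * u].
Proof.
move=> t0 th.
have Ot : Om t by exact: Om_half.
set d := (k.+2%:R : R)^-1.
have d0 : 0 < d by rewrite invr_gt0 ltr0n.
have d1 : d <= 2^-1 by rewrite lef_pV2 ?posrE ?ltr0n // ler_nat.
have pt := phi_pos Ot.
set c := cc k t.
have c0 : 0 <= c by rewrite /c /cc -/d; apply: divr_ge0; [rewrite subr_ge0; lra | exact: ltW].
set e := d * d * psi t.
have e0 : 0 < e by rewrite /e; apply: mulr_gt0; [exact: mulr_gt0 | exact: psi_gt0].
have [sg [sg0 sgt psg]] : exists sg, [/\ 0 < sg, sg <= t & psi sg <= e].
  move/cvgrPdist_lt: hlim => /(_ e e0).
  case/nbhs_ballP => r /= r0 Hr.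
  exists (Num.min (r / 2) t); split.
  - by rewrite lt_min t0 divr_gt0.
  - by rewrite ge_min lexx orbT.
  - have m0 : 0 < Num.min (r / 2) t by rewrite lt_min t0 divr_gt0.
    have := Hr (Num.min (r / 2) t).
    rewrite /ball /= sub0r normrN gtr0_norm // => /(_ _ m0).
    have : Num.min (r / 2) t < r.
      by rewrite gt_min; apply/orP; left; lra.
    move=> mr /(_ mr) h.
    rewrite /psi; apply: ltW; move: h; rewrite sub0r normrN.
    by move/(le_lt_trans (ler_norm _)).
have Osg : Om sg by exact: Om_down Ot.
pose h u := psi u - c * u.
have hc : {within `[sg, t], continuous h}.
  apply: continuous_in_subspaceT => x; rewrite inE /= in_itv /= => /andP[sx xt].
  apply/cvgrPdist_lt => eps eps0.
  have sg2 : 0 < sg / 2 by rewrite divr_gt0.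
  have Osg2 : Om (sg / 2) by apply: (Om_down sg2 _ Osg); lra.
  have psg2 := phi_pos Osg2.
  set K := (phi (sg / 2))^-1 + c.
  have K0 : 0 < K by rewrite /K ltr_pwDl // invr_gt0.
  apply/nbhs_ballP; exists (Num.min (sg / 2) (eps / K)).
    by rewrite /= lt_min sg2 divr_gt0.
  move=> y; rewrite /ball /= lt_min => /andP[ys ye].
  have xy : `|x - y| < sg / 2 by [].
  have ay : sg / 2 <= y.
    move: xy; rewrite ltr_norml => /andP[_]; lra.
  have y1 : y < 1.
    move: xy; rewrite ltr_norml => /andP[]; lra.
  have ax : sg / 2 <= x by lra.
  have x1 : x < 1 by lra.
  rewrite /h (_ : psi x - c * x - (psi y - c * y) = (psi x - psi y) - c * (x - y)); last by ring.
  idtac.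
  apply: (le_lt_trans (ler_normD _ _)).
  rewrite normrN normrM (ger0_norm c0).
  apply: (le_lt_trans (lerD (psi_lipabs Osg2 ax ay x1 y1) (lexx _))).
  rewrite (_ : _ + _ = K * `|x - y|); last by rewrite /K; ring.
  by move: ye; rewrite ltr_pdivlMr // mulrC.
have [s sI smin] := EVT_min sgt hc.
move: sI; rewrite in_itv /= => /andP[sgs st].
have s0 : 0 < s by exact: lt_le_trans sgs.
have Os : Om s by exact: Om_down Ot.
exists s; split => //.
- rewrite leNgt; apply/negP => hs.
  have q0 : 0 < (phi t)^-1 by rewrite invr_gt0.
  set q := (phi t)^-1 in q0.
  have H1 : s * q <= psi s by rewrite /q; exact: psi_lb.
  have H2 : c = (1 - d) * q by rewrite /c /cc.
  have H3 : psi t = t * q by [].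
  have H4 : h s <= h sg by apply: smin; rewrite in_itv /= lexx sgt.
  have H5 : h sg <= psi sg by rewrite /h lerBlDr lerDl mulr_ge0 // ltW.
  have H6 : d * q * (t * d) < d * q * s by rewrite ltr_pM2l // mulr_gt0.
  move: H4; rewrite /h H2.
  rewrite /e H3 in psg.
  nra.
- move=> u su ut; apply: smin; rewrite in_itv /= ut andbT.
  exact: le_trans su.
Qed.

Definition stepP k t s := [/\ 0 < s, s <= t / k.+2%:R &
  forall u, s <= u -> u <= t -> psi s - cc k t * s <= psi u - cc k t * u].

Definition nxt k t := xget 0 [set s | stepP k t s].

Fixpoint tk (k : nat) : R := if k is k'.+1 then nxt k' (tk k') else 2^-1.

Lemma tk_prop k : [/\ 0 < tk k, tk k <= 2^-1 / k.+1%:R & stepP k (tk k) (tk k.+1)].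
Proof.
elim: k => [|k [t0 th [s0 st smin]]].
  have t0 : 0 < tk 0 by rewrite /= invr_gt0 ltr0n.
  have th : tk 0 <= 2^-1 by [].
  split => //; first by rewrite (_ : 1%:R = 1) // divr1.
  by rewrite /=; apply: (xgetPex 0 (step _ _ _)).
have s0' : 0 < tk k.+1 by [].
have sh : tk k.+1 <= 2^-1 / k.+2%:R.
  apply: (le_trans st); rewrite ler_wpM2r // ?invr_ge0 ?ler0n //.
  apply: (le_trans th); rewrite ler_pdivrMr ?ltr0n // ler_peMr ?invr_ge0 ?ler0n//.
  by rewrite ler1n.
split => //; rewrite /=; apply: (xgetPex 0 (step _ _ _)) => //.
apply: (le_trans sh); rewrite ler_pdivrMr ?ltr0n // ler_peMr ?invr_ge0 ?ler0n//.
by rewrite ler1n.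
Qed.

Arguments tk : simpl never.

Lemma tk_gt0 k : 0 < tk k. Proof. by case: (tk_prop k). Qed.
Lemma tk_ub k : tk k <= 2^-1 / k.+1%:R. Proof. by case: (tk_prop k). Qed.
Lemma tk_le_half k : tk k <= 2^-1.
Proof.
apply: (le_trans (tk_ub k)); rewrite ler_pdivrMr ?ltr0n // ler_peMr ?invr_ge0 ?ler0n//.
by rewrite ler1n.
Qed.
Lemma Om_tk k : Om (tk k). Proof. exact: Om_half (tk_gt0 k) (tk_le_half k). Qed.
Lemma tk_next k : tk k.+1 <= tk k / k.+2%:R.
Proof. by case: (tk_prop k) => _ _ []. Qed.
Lemma tk_min k u : tk k.+1 <= u -> u <= tk k ->
  psi (tk k.+1) - cc k (tk k) * tk k.+1 <= psi u - cc k (tk k) * u.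
Proof. by case: (tk_prop k) => _ _ [_ _ h]; apply: h. Qed.

Lemma tk_lt k : tk k.+1 < tk k.
Proof.
apply: (le_lt_trans (tk_next k)); rewrite ltr_pdivrMr ?ltr0n //.
by rewrite ltr_pMr ?tk_gt0 // ltr1n.
Qed.

Lemma tk_decr m n : (m <= n)%N -> tk n <= tk m.
Proof.
move/subnK => <-; elim: (n - m)%N => [|i IH]; first by rewrite add0n.
by rewrite addSn (le_trans (ltW (tk_lt _))).
Qed.

Definition block k := [set u : R | tk k.+1 <= u < tk k].

Lemma block_uniq j k u : block j u -> block k u -> j = k.
Proof.
rewrite /block /= => /andP[ju uj] /andP[ku uk].
have [jk|kj|//] := ltngtP j k.
  have := tk_decr jk; move=> h; have := lt_le_trans uk h; rewrite ltNge ju //.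
have := tk_decr kj; move=> h; have := lt_le_trans uj h; rewrite ltNge ku //.
Qed.

Lemma block_ex u : 0 < u -> u < tk 0 -> exists k, block k u.
Proof.
move=> u0 ut.
have exN : exists N, tk N <= u.
  exists (Num.trunc (u^-1)); apply: (le_trans (tk_ub _)).
  rewrite ler_pdivrMr ?ltr0n //.
  have h1 := truncnS_gt (u^-1).
  have uu : u * u^-1 = 1 by rewrite mulfV // gt_eqF.
  set n := (Num.trunc u^-1).+1%:R in h1 *.
  nra.
have exN' : exists N, (tk N <= u) by [].
pose m := ex_minn exN'.
have : (tk m <= u) by rewrite /m; case: ex_minnP.
have mmin : forall n, (tk n <= u) -> (m <= n)%N by rewrite /m; case: ex_minnP.
case E : m => [|k] h.
  by move: ut; rewrite ltNge h.
exists k; rewrite /block /= h /=.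
rewrite ltNge; apply/negP => /mmin; rewrite E ltnn //.
Qed.

Definition blk u := xget 0%N [set k | block k u].

Lemma blkE k u : block k u -> blk u = k.
Proof.
move=> bu; rewrite /blk.
have ex : exists k, [set k | block k u] k by exists k.
by have /block_uniq := xgetPex 0%N ex; apply.
Qed.

Definition fa (a : nat -> R) u := if (0 < u) && (u < tk 0) then a (blk u) else 0.

Lemma faE a k u : block k u -> fa a u = a k.
Proof.
move=> bu; rewrite /fa (blkE bu).
move: bu => /andP[ku uk].
rewrite (lt_le_trans (tk_gt0 k.+1) ku) /=.
by rewrite (lt_le_trans uk (tk_decr (leq0n k))).
Qed.

Lemma fa_out a u : ~ (0 < u < tk 0) -> fa a u = 0.
Proof. by rewrite /fa => /negP/negbTE ->. Qed.

Lemma mcst (P : Prop) : measurable [set _ : R | P].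
Proof.
case: (pselect P) => p.
  by rewrite (_ : [set _ | P] = setT) //; apply/seteqP; split.
by rewrite (_ : [set _ | P] = set0) //; apply/seteqP; split.
Qed.

Lemma mblock k : measurable (block k).
Proof.
rewrite (_ : block k = `[tk k.+1, tk k[%classic); first exact: measurable_itv.
by apply/seteqP; split => x /=; rewrite in_itv.
Qed.

Lemma mI0 : measurable [set u : R | 0 < u < tk 0].
Proof.
rewrite (_ : [set u | _] = `]0, tk 0[%classic); first exact: measurable_itv.
by apply/seteqP; split => x /=; rewrite in_itv.
Qed.

Lemma mfa a : measurable_fun setT (fa a).
Proof.
move=> _ Y mY; rewrite setTI.
have -> : fa a @^-1` Y = (\bigcup_k (block k `&` [set _ | Y (a k)])) `|`
   (~` [set u | 0 < u < tk 0] `&` [set _ | Y 0]).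
  apply/seteqP; split => u /=.
    case: (pselect (0 < u < tk 0)) => h Yu.
      case/andP: h => u0 ut; have [k bk] := block_ex u0 ut.
      by left; exists k => //; split => //; rewrite -(faE a bk).
    by right; split => //; rewrite -(fa_out a h).
  case=> [[k _ [bk Yk]]|[nh Y0]]; first by rewrite (faE a bk).
  by rewrite (fa_out a nh).
apply: measurableU.
  by apply: bigcupT_measurable => k; apply: measurableI; [exact: mblock|exact: mcst].
apply: measurableI; last exact: mcst.
exact: measurableC mI0.
Qed.

Lemma mnorm_gt (c : R) : 0 <= c -> measurable [set y : R | c < `|y|].
Proof.
move=> c0.
rewrite (_ : [set y | _] = `]c, +oo[%classic `|` `]-oo, - c[%classic).
  by apply: measurableU; exact: measurable_itv.
apply/seteqP; split => y /=; rewrite !in_itv /= ?andbT.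
  by rewrite ltr_normr => /orP[h|h]; [left|right; rewrite ltrNr].
by case=> h; rewrite ltr_normr ?h // ltrNr h orbT.
Qed.

Lemma mdist (f : R -> R) (l : R) : measurable_fun Om f -> 0 <= l ->
  measurable (Om `&` [set t | l < `|f t|]).
Proof.
move=> mf l0; have := mf mOm _ (mnorm_gt l0).
by rewrite (_ : Om `&` _ = Om `&` [set t | l < `|f t|]).
Qed.

Lemma rearr_ge0 f s : (0 <= rearr Om f s)%E.
Proof.
by apply: le_ereal_inf_tmp => _ [l [l0 _] <-]; rewrite lee_fin.
Qed.

Lemma leb_itv0 (s : R) : 0 < s ->
  @lebesgue_measure R [set t : R | 0 < t < s] = s%:E.
Proof.
move=> s0; rewrite (_ : [set t | _] = `]0, s[%classic).
  by rewrite lebesgue_measure_itv /= lte_fin s0 /= sube0.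
by apply/seteqP; split => x /=; rewrite in_itv.
Qed.

Lemma rearr_up (g f : R -> R) s : measurable_fun Om f ->
  (forall u v, 0 < u -> u <= v -> g v <= g u) -> (forall u, 0 <= g u) ->
  (forall u, Om u -> `|f u| <= g u) -> 0 < s -> (rearr Om f s <= (g s)%:E)%E.
Proof.
move=> mf gdec g0 fg s0.
apply: ereal_inf_lbound; exists (g s) => //; split; first exact: g0.
rewrite /distfun -(leb_itv0 s0).
apply: le_measure; rewrite ?inE.
- exact: mdist.
- rewrite (_ : [set t | _] = `]0, s[%classic); first exact: measurable_itv.
  by apply/seteqP; split => x /=; rewrite in_itv.
- move=> u [Ou]; rewrite /= => h; rewrite Om_pos //=.
  rewrite ltNge; apply/negP => su.
  have := gdec _ _ s0 su; have := fg _ Ou.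
  move=> a b; have := le_trans a b; rewrite leNgt h //.
Qed.

Lemma rearr_low (f : R -> R) (B : set R) (c s : R) : measurable_fun Om f -> measurable B -> B `<=` Om ->
  (forall u, B u -> c <= `|f u|) -> 0 <= c ->
  (s%:E < @lebesgue_measure R B)%E -> (c%:E <= rearr Om f s)%E.
Proof.
move=> mf mB BOm Bc c0 sB.
apply: le_ereal_inf_tmp => _ [l [l0 dl] <-]; rewrite lee_fin.
rewrite leNgt; apply/negP => lc.
have : (@lebesgue_measure R B <= distfun Om f l)%E.
  apply: le_measure; rewrite ?inE //; first exact: mdist.
  move=> u Bu; split; first exact: BOm.
  by rewrite /=; apply: (lt_le_trans lc); exact: Bc.
move=> h; have := le_lt_trans (le_trans h dl) sB.
by rewrite ltxx.
Qed.

Lemma le_int_nm (D : set R) (f1 f2 : R -> \bar R) :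
  (forall x, D x -> (0 <= f1 x)%E) -> (forall x, D x -> (f1 x <= f2 x)%E) ->
  (\int[@lebesgue_measure R]_(x in D) f1 x <= \int[@lebesgue_measure R]_(x in D) f2 x)%E.
Proof.
move=> f10 f12.
have f20 : forall x, D x -> (0 <= f2 x)%E by move=> x Dx; exact: le_trans (f10 _ Dx) (f12 _ Dx).
rewrite !ge0_integralE //; apply: le_ereal_sup => _ [h hf <-]; exists h => //.
move=> x; apply: (le_trans (hf x)); rewrite /patch; case: ifPn => // /set_mem Dx.
exact: f12.
Qed.

Definition Fk (t : R) k := block k `&` [set u : R | 0 < u < t].

Lemma mFk t k : measurable (Fk t k).
Proof.
apply: measurableI; first exact: mblock.
rewrite (_ : [set u | _] = `]0, t[%classic); first exact: measurable_itv.
by apply/seteqP; split => x /=; rewrite in_itv.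
Qed.

Lemma term_bound (a : nat -> R) (M t : R) k : 0 <= M -> 0 < t -> t <= tk 0 ->
  0 <= a k -> a k <= M * cc k (tk k) ->
  ((a k)%:E * @lebesgue_measure R (Fk t k) <=
   (M * (psi (Num.min t (tk k)) - psi (Num.min t (tk k.+1))))%:E)%E.
Proof.
move=> M0 t0 tt0 ak0 akM.
have [tle|tgt] := leP t (tk k.+1).
  have -> : Fk t k = set0.
    apply/seteqP; split => u //= [/andP[ku _] /andP[_ ut]].
    by have := lt_le_trans ut tle; rewrite ltNge ku.
  have h1 : Num.min t (tk k) = t.
    by apply/min_idPl; exact: le_trans tle (ltW (tk_lt k)).
  have h2 : Num.min t (tk k.+1) = t by apply/min_idPl.
  by rewrite measure0 mule0 h1 subrr mulr0.
set m := Num.min t (tk k).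
have mk : m <= tk k by rewrite /m ge_min lexx orbT.
have km : tk k.+1 < m by rewrite /m lt_min tgt tk_lt.
have -> : Fk t k = `[tk k.+1, m[%classic.
  apply/seteqP; split => u /=.
    case=> [/andP[ku uk] /andP[u0 ut]]; rewrite in_itv /= ku /=.
    by rewrite /m lt_min ut uk.
  rewrite in_itv /= => /andP[ku]; rewrite /m lt_min => /andP[ut uk].
  split; first by rewrite /block /= ku uk.
  by rewrite /= ut (lt_le_trans (tk_gt0 _) ku).
have := tk_min (ltW km) mk.
move: km; set b := tk k.+1 => km.
rewrite lebesgue_measure_itv /= lte_fin km /= -EFinB -EFinM lee_fin.
set cK := cc k (tk k) => hmin.
have h3 : cK * (m - b) <= psi m - psi b by rewrite mulrBr; lra.
apply: (le_trans (ler_wpM2r _ akM)); first by rewrite subr_ge0 ltW.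
by rewrite -mulrA ler_wpM2l.
Qed.

Lemma fa_ge0 (a : nat -> R) u : (forall k, 0 <= a k) -> 0 <= fa a u.
Proof. by move=> a0; rewrite /fa; case: ifPn. Qed.

Lemma int_fa (a : nat -> R) (M t : R) : 0 <= M -> Om t ->
  (forall k, 0 <= a k) -> (forall k, a k <= M * cc k (tk k)) ->
  (\int[@lebesgue_measure R]_(x in [set s : R | (0 < s < t)%R]) (fa a x)%:E
    <= (M * psi t)%:E)%E.
Proof.
move=> M0 Ot a0 aM.
have t0 := Om_pos Ot.
set t' := Num.min t (tk 0).
have t'0 : 0 < t' by rewrite /t' lt_min t0 tk_gt0.
have t't0 : t' <= tk 0 by rewrite /t' ge_min lexx orbT.
have t't : t' <= t by rewrite /t' ge_min lexx.
have Ot' : Om t' by exact: Om_down Ot.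
have -> : (\int[@lebesgue_measure R]_(x in [set s : R | (0 < s < t)%R]) (fa a x)%:E =
   \int[@lebesgue_measure R]_(x in [set s : R | (0 < s < t')%R]) (fa a x)%:E)%E.
  rewrite integral_mkcond [in RHS]integral_mkcond.
  congr (integral _ _ _); apply/funext => x; rewrite /patch.
  case: ifPn => [/set_mem /= /andP[x0 xt]|nx]; case: ifPn => [/set_mem /= /andP[x0' xt']|nx'] //.
    have nx0 : ~ (0 < x < tk 0).
      move=> /andP[_ xt0].
      apply: (negP nx'); apply/mem_set => /=.
      by rewrite x0 /t' lt_min xt xt0.
    by rewrite fa_out.
  exfalso; apply: (negP nx); apply/mem_set => /=.
  by rewrite x0' (lt_le_trans xt' t't).
have -> : [set s : R | (0 < s < t')%R] = \bigcup_k Fk t' k.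
  apply/seteqP; split => u /=.
    move=> /andP[u0 ut']; have [k bk] := block_ex u0 (lt_le_trans ut' t't0).
    by exists k => //; split => //=; rewrite u0 ut'.
  by case=> k _ [_].
rewrite ge0_integral_bigcup //.
- set Psi := fun k => psi (Num.min t' (tk k)).
  apply: lime_le; first by apply: is_cvg_nneseries => n _ _; apply: integral_ge0 => x _; rewrite lee_fin fa_ge0.
  apply: nearW => n.
  apply: (@le_trans _ _ (\sum_(0 <= i < n) (M * (Psi i - Psi i.+1))%:E)%R).
    apply: lee_sum => i _.
    rewrite (eq_integral (fun _ => (a i)%:E)); last first.
      by move=> x; rewrite inE => -[bx _]; rewrite (faE a bx).
    rewrite integral_cst; last exact: mFk.
    exact: term_bound.
  rewrite sumEFin lee_fin -mulr_sumr.
  rewrite (telescope_sumr_eq (fun i => - Psi i)) //; last by move=> k _; rewrite opprK addrC.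
  apply: ler_wpM2l => //.
  have P0 : Psi 0%N = psi t' by rewrite /Psi; congr psi; apply/min_idPl.
  have Pn : 0 < Psi n.
    apply: psi_gt0; apply: (Om_down _ _ Ot').
      by rewrite lt_min t'0 tk_gt0.
    by rewrite ge_min lexx.
  rewrite P0; have := psi_mono Ot' Ot t't; lra.
- move=> k; exact: mFk.
- apply/measurable_EFinP; apply: measurable_funS (mfa a) => //.
- by move=> x _; rewrite lee_fin fa_ge0.
- move=> i j _ _ [u [[bi _] [bj _]]]; exact: block_uniq bi bj.
Qed.

Definition cK k := cc k (tk k).

Lemma cK_gt0 k : 0 < cK k.
Proof.
rewrite /cK /cc; apply: divr_gt0; last exact: phi_pos (Om_tk k).
rewrite subr_gt0 invf_lt1 ?ltr0n // ltr1n //.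
Qed.

Lemma cK_step k : cK k <= cK k.+1.
Proof.
rewrite /cK /cc; apply: ler_pM.
- rewrite subr_ge0 invf_le1 ?ltr0n // ler1n //.
- by apply/ltW; rewrite invr_gt0; apply: phi_pos; exact: Om_tk.
- by rewrite lerD2l lerN2 lef_pV2 ?posrE ?ltr0n // ler_nat.
- have p1 := phi_pos (Om_tk k); have p2 := phi_pos (Om_tk k.+1).
  rewrite lef_pV2 ?posrE //.
  by apply: phi_mono; [exact: Om_tk|exact: Om_tk|exact: ltW (tk_lt k)].
Qed.

Lemma cK_mono k j : (k <= j)%N -> cK k <= cK j.
Proof.
move/subnK => <-; elim: (j - k)%N => [|i IH]; first by rewrite add0n.
by rewrite addSn (le_trans IH (cK_step _)).
Qed.

Lemma block_mono ku kv u v : block ku u -> block kv v -> u <= v -> (kv <= ku)%N.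
Proof.
move=> /andP[ku1 uk] /andP[kv1 vk] uv.
rewrite leqNgt; apply/negP => lt.
have := tk_decr lt; move=> h.
have : v < u by apply: (lt_le_trans vk); exact: le_trans h ku1.
by rewrite ltNge uv.
Qed.

Lemma fa_dec (a : nat -> R) : (forall k j, (k <= j)%N -> a k <= a j) ->
  (forall k, 0 <= a k) -> forall u v, 0 < u -> u <= v -> fa a v <= fa a u.
Proof.
move=> amono a0 u v u0 uv.
case: (pselect (0 < v < tk 0)) => hv; last by rewrite (fa_out a hv) fa_ge0.
case/andP: hv => v0 vt.
have ut : u < tk 0 by exact: le_lt_trans vt.
have [ku bu] := block_ex u0 ut; have [kv bv] := block_ex v0 vt.
rewrite (faE a bu) (faE a bv); apply: amono; exact: block_mono bu bv uv.
Qed.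

Lemma measure_block k : @lebesgue_measure R (block k) = (tk k - tk k.+1)%:E.
Proof.
rewrite (_ : block k = `[tk k.+1, tk k[%classic).
  have := tk_lt k; set b := tk k.+1 => h.
  by rewrite lebesgue_measure_itv /= lte_fin h /= -EFinB.
by apply/seteqP; split => x /=; rewrite in_itv.
Qed.

Lemma block_Om k : block k `<=` Om.
Proof.
move=> u /andP[ku uk]; apply: (Om_down _ (ltW uk) (Om_tk k)).
exact: lt_le_trans (tk_gt0 _) ku.
Qed.

Lemma cK_phi k : (1 - (k.+2%:R)^-1) ^+ 2 <= cK k * phi (tk k - tk k.+1).
Proof.
set d := (k.+2%:R : R)^-1.
have d0 : 0 < d by rewrite invr_gt0 ltr0n.
have d1 : d <= 2^-1 by rewrite lef_pV2 ?posrE ?ltr0n // ler_nat.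
set t := tk k; set m := tk k - tk k.+1.
have t0 : 0 < t := tk_gt0 k.
have Ot : Om t := Om_tk k.
have hn : tk k.+1 <= t * d := tk_next k.
have m0 : 0 < m by rewrite /m subr_gt0 tk_lt.
have mt : m <= t by rewrite /m lerBlDr lerDl ltW // tk_gt0.
have Om' : Om m by exact: Om_down Ot.
have qc := phi_qc Om' Ot mt.
have pt : 0 < phi t := phi_pos Ot.
have pm : 0 < phi m := phi_pos Om'.
have md : (1 - d) * t <= m by rewrite /m -/t mulrBl mul1r [d * t]mulrC; lra.
have h1 : (1 - d) * phi t <= phi m.
  have e1 : phi t / t * t = phi t by rewrite divfK // gt_eqF.
  have e2 : phi m / m * m = phi m by rewrite divfK // gt_eqF.
  have X0 : 0 <= phi t / t by rewrite divr_ge0 // ltW.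
  move: qc e1 e2 X0 md; set X := phi t / t; set Y := phi m / m.
  move=> qc e1 e2 X0 md.
  have h2 : X * ((1 - d) * t) <= X * m by rewrite ler_wpM2l.
  have h3 : X * m <= Y * m by rewrite ler_wpM2r // ltW.
  nra.
rewrite /cK /cc -/d -/t expr2.
have h4 : 1 - d <= (phi t)^-1 * phi m.
  by rewrite mulrC ler_pdivlMr // mulrC.
rewrite -mulrA; apply: ler_wpM2l => //; lra.
Qed.

Lemma pc_inf n N : exists k, (N <= k)%N /\ logn 2 k.+1 = n.
Proof.
exists (2 ^ n * N.*2.+1).-1; split.
  have h := expn_gt0 2 n.
  have : (N.*2.+1 <= 2 ^ n * N.*2.+1)%N by rewrite leq_pmull.
  lia.
rewrite prednK ?muln_gt0 ?expn_gt0 //.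
rewrite lognM ?expn_gt0 // pfactorK // logn_coprime ?addn0 //.
by rewrite coprime2n /= odd_double.
Qed.

Lemma le_from_seq (a : R) (E : \bar R) : 0 <= a ->
  (forall N, exists k, (N <= k)%N /\ ((a * (1 - (k.+2%:R)^-1) ^+ 2)%:E <= E)%E) ->
  (a%:E <= E)%E.
Proof.
move=> a0 h; case: E h => [r| |] h; last 2 first.
- by rewrite leey.
- have [k [_]] := h 0%N; by rewrite leeNy_eq.
rewrite lee_fin leNgt; apply/negP => ra.
set N := Num.trunc (2 * a / (a - r)).
have [k [Nk hk]] := h N.
have hN := truncnS_gt (2 * a / (a - r)).
rewrite -/N in hN.
have NK : (N.+1%:R : R) <= k.+2%:R by rewrite ler_nat; lia.
set D := (k.+2%:R : R) in NK hk.
have D0 : 0 < D by rewrite /D ltr0n.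
have DD : D * D^-1 = 1 by rewrite mulfV // gt_eqF.
have ar : 0 < a - r by rewrite subr_gt0.
have h2 : 2 * a < D * (a - r).
  have := lt_le_trans hN NK; rewrite ltr_pdivrMr //.
rewrite lee_fin in hk.
have d0 : 0 < D^-1 by rewrite invr_gt0.
set d := D^-1 in DD d0 hk.
have h3 : 2 * a * d < a - r.
  have : 2 * a * d < D * (a - r) * d by rewrite ltr_pM2r.
  by rewrite [D * _ * _]mulrAC DD mul1r.
nra.
Qed.

Definition pc k := logn 2 k.+1.
Definition Tmap (x : nat -> R) := fa (fun k => x (pc k) * cK k).

Lemma mT x : measurable_fun Om (Tmap x).
Proof. exact: measurable_funS (mfa _). Qed.

Lemma m_itv0 (t : R) : measurable [set s : R | 0 < s < t].
Proof.
rewrite (_ : [set s | _] = `]0, t[%classic); first exact: measurable_itv.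
by apply/seteqP; split => x /=; rewrite in_itv.
Qed.

Lemma norm_T x : bounded_seq x -> Mnorm Om phi (Tmap x) = linf_norm x.
Proof.
move=> [M0 hM].
have Bub : forall n, ((`|x n|)%:E <= linf_norm x)%E.
  by move=> n; apply: ereal_sup_ubound; exists n.
have BM : (linf_norm x <= M0%:E)%E.
  by apply: ge_ereal_sup => _ [n _ <-]; rewrite lee_fin.
have [b Bb] : exists b, linf_norm x = b%:E.
  move: (Bub 0%N) BM; case: (linf_norm x) => [b||] //; first by exists b.
have hb : forall n, `|x n| <= b by move=> n; have := Bub n; rewrite Bb lee_fin.
have b0 : 0 <= b by exact: le_trans (normr_ge0 _) (hb 0%N).
rewrite Bb; apply/eqP; rewrite eq_le; apply/andP; split.
- apply: ge_ereal_sup => _ [t Ot <-].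
  have t0 := Om_pos Ot.
  have pt := phi_pos Ot.
  set g := fa (fun k => b * cK k).
  have a0 : forall k, 0 <= b * cK k by move=> k; rewrite mulr_ge0 // ltW // cK_gt0.
  have gdec : forall u v, 0 < u -> u <= v -> g v <= g u.
    apply: fa_dec => // k j kj; rewrite ler_wpM2l //; exact: cK_mono.
  have g0 : forall u, 0 <= g u by move=> u; exact: fa_ge0.
  have fg : forall u, Om u -> `|Tmap x u| <= g u.
    move=> u _; rewrite /Tmap /g /fa; case: ifP => _; last by rewrite normr0.
    by rewrite normrM (gtr0_norm (cK_gt0 _)) ler_wpM2r // ltW // cK_gt0.
  have hr : forall s, [set s : R | (0 < s < t)%R] s ->
      (rearr Om (Tmap x) s <= (g s)%:E)%E.
    by move=> s /andP[s0 _]; apply: rearr_up => //; exact: mT.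
  have hi := le_int_nm (fun s _ => rearr_ge0 (Tmap x) s) hr.
  have hj := int_fa b0 Ot a0 (fun k => lexx _).
  have p0 : (0 <= (phi t / t)%:E)%E by rewrite lee_fin divr_ge0 // ltW.
  apply: (le_trans (lee_wpmul2l p0 (le_trans hi hj))).
  rewrite -EFinM lee_fin /psi.
  rewrite (_ : phi t / t * (b * (t / phi t)) = b) //.
  by field; apply/andP; split; rewrite gt_eqF.
- rewrite -Bb; apply: ge_ereal_sup => _ [n _ <-].
  apply: le_from_seq (normr_ge0 _) _ => N.
  have [k [Nk pk]] := pc_inf n N.
  exists k; split => //.
  set m := tk k - tk k.+1.
  have m0 : 0 < m by rewrite /m subr_gt0 tk_lt.
  have Om' : Om m.
    apply: (Om_down m0 _ (Om_tk k)).
    by rewrite /m lerBlDr lerDl ltW // tk_gt0.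
  apply: (le_trans _ (ereal_sup_ubound _)); last by exists m.
  set c := `|x n| * cK k.
  have c0 : 0 <= c by rewrite mulr_ge0 // ltW // cK_gt0.
  have hlow : forall s, [set s : R | (0 < s < m)%R] s ->
      (cst c%:E s <= rearr Om (Tmap x) s)%E.
    move=> s /andP[s0 sm]; change (c%:E <= rearr Om (Tmap x) s)%E.
    apply: (@rearr_low _ (block k)).
    - exact: mT.
    - exact: mblock.
    - exact: block_Om.
    - move=> u bu; rewrite /Tmap (faE _ bu) normrM (gtr0_norm (cK_gt0 _)).
      by rewrite /pc pk.
    - exact: c0.
    - by rewrite measure_block lte_fin.
  have ic : (\int[@lebesgue_measure R]_(s in [set s : R | (0 < s < m)%R]) cst c%:E s
      = (c * m)%:E)%E.
    rewrite integral_cst; last exact: m_itv0.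
    rewrite (_ : (c * m)%:E = (c%:E * @lebesgue_measure R [set s : R | (0 < s < m)%R])%E) //.
    by rewrite leb_itv0.
  have hint : ((c * m)%:E <= \int[@lebesgue_measure R]_(s in [set s : R | (0 < s < m)%R])
      rearr Om (Tmap x) s)%E.
    by rewrite -ic; apply: le_int_nm => // s _; rewrite lee_fin.
  have pm : 0 < phi m := phi_pos Om'.
  have p0 : (0 <= (phi m / m)%:E)%E by rewrite lee_fin divr_ge0 // ltW.
  apply: (le_trans _ (lee_wpmul2l p0 hint)).
  rewrite -!EFinM lee_fin.
  rewrite (_ : phi m / m * (c * m) = c * phi m); last by field; rewrite gt_eqF.
  rewrite /c -mulrA ler_wpM2l //.
  exact: cK_phi.
Qed.

End Main.

Unset Implicit Arguments.

Theorem corollary3p9 (R : realType) (Omega : set R) (phi : R -> R) :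
  (Omega = [set t : R | 0 < t < 1] \/ Omega = [set t : R | 0 < t]) ->
  quasi_concave Omega phi ->
  (fun t => t / phi t) @ 0^'+ --> 0 ->
  exists T : (nat -> R) -> (R -> R), lattice_isometric_embedding Omega phi T.
Proof.
move=> hOm hq hlim.
exists (Tmap phi); split.
- move=> x bx; split; first exact: mT.
  rewrite (norm_T hOm hq hlim bx).
  case: bx => M hM.
  apply: (le_lt_trans (y := M%:E)); last exact: ltry.
  by apply: ge_ereal_sup => _ [n _ <-]; rewrite lee_fin.
- move=> x y _ _; apply: aeW => u _.
  rewrite /Tmap /fa /=; case: ifP => _; last by rewrite addr0.
  by rewrite mulrDl.
- move=> a x _; apply: aeW => u _.
  rewrite /Tmap /fa; case: ifP => _; last by rewrite mulr0.
  by rewrite mulrA.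
- move=> x y _ _; apply: aeW => u _.
  rewrite /Tmap /fa; case: ifP => _; last by rewrite maxxx.
  by rewrite maxr_pMl // ltW // (cK_gt0 hOm hq hlim).
- move=> x bx; exact: norm_T.
Qed.
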